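(* Consider the reserve price problem (P): $\max_{\beta\in X}R(\beta)=\frac1n\sum_{i=1}^n r(w^i\cdot\beta;b_i^{(1)},b_i^{(2)})$, and the mixed-integer program (MIP): $$\max_{\beta,v,y,z}\ \frac1n\sum_{i=1}^n y_i\quad\text{s.t. } v_i=w^i\cdot\beta,\ \ (v_i,y_i,z^i)\in F(b_i^{(1)},b_i^{(2)},l_i,u_i)\ \ (i=1,\dots,n),\ \ \beta\in X,$$ with $z^i\in\mathbb{R}^3$. Then (i) if $(\beta,v,y,z)$ is an optimal solution of (MIP), $\beta$ is an optimal solution of (P); and (ii) if $\beta$ is an optimal solution of (P), there exist $v,y,z$ such that $(\beta,v,y,z)$ is an optimal solution of (MIP).
   Context: The reward function is $r(v;b^{(1)},b^{(2)})=b^{(2)}$ if $v\le b^{(2)}$, $=v$ if $b^{(2)}<v\le b^{(1)}$, and $=0$ if $v>b^{(1)}$. Data: $w^i\in\mathbb{R}^d$, $b_i^{(1)}\ge b_i^{(2)}\ge 0$ ($i=1,\dots,n$), $X=[L,U]^d$; $l_i=\min_{\beta\in X}w^i\cdot\beta$, $u_i=\max_{\beta\in X}w^i\cdot\beta$. For data $b^{(1)},b^{(2)},l,u$, $F(b^{(1)},b^{(2)},l,u)$ is the set of $(v,y,z)\in\mathbb{R}\times\mathbb{R}\times\mathbb{R}^3$ satisfying $y\le b^{(2)}z_1+b^{(1)}z_2$, $y\ge b^{(2)}(z_1+z_2)$, $y\le v+(b^{(2)}-l)z_1-b^{(1)}z_3$, $y\ge v-uz_3$, $l\le v\le u$, $z_1+z_2+z_3=1$,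 $z\in[0,1]^3$, and $z\in\mathbb{Z}^3$. *)

(* Defs.v *)
From Stdlib Require Import Reals ZArith.
Open Scope R_scope.

Fixpoint sumR (n : nat) (f : nat -> R) : R :=
  match n with O => 0 | S k => sumR k f + f k end.

(* dot product in R^d, vectors as functions nat -> R (coordinates 0..d-1) *)
Definition dot (d : nat) (a b : nat -> R) : R := sumR d (fun j => a j * b j).

Definition inX (d : nat) (L U : R) (beta : nat -> R) : Prop :=
  forall j, (j < d)%nat -> L <= beta j <= U.

Definition reward (v b1 b2 : R) : R :=
  if Rle_dec v b2 then b2 else if Rle_dec v b1 then v else 0.

Definition revenue (n d : nat) (w : nat -> nat -> R) (b1 b2 : nat -> R)
  (beta : nat -> R) : R :=
  / INR n * sumR n (fun i => reward (dot d (w i) beta) (b1 i) (b2 i)).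

Definition is_int (x : R) : Prop := exists k : Z, x = IZR k.

Definition inF (b1 b2 l u : R) (v y : R) (z : R * R * R) : Prop :=
  let '(z1, z2, z3) := z in
  y <= b2 * z1 + b1 * z2 /\
  y >= b2 * (z1 + z2) /\
  y <= v + (b2 - l) * z1 - b1 * z3 /\
  y >= v - u * z3 /\
  l <= v <= u /\
  z1 + z2 + z3 = 1 /\
  0 <= z1 <= 1 /\ 0 <= z2 <= 1 /\ 0 <= z3 <= 1 /\
  is_int z1 /\ is_int z2 /\ is_int z3.

Definition P_optimal n d w L U b1 b2 (beta : nat -> R) : Prop :=
  inX d L U beta /\
  forall beta', inX d L U beta' -> revenue n d w b1 b2 beta' <= revenue n d w b1 b2 beta.

Definition MIP_feasible n d w L U b1 b2 (l u : nat -> R)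
  (beta v y : nat -> R) (z : nat -> R * R * R) : Prop :=
  inX d L U beta /\
  forall i, (i < n)%nat ->
    v i = dot d (w i) beta /\ inF (b1 i) (b2 i) (l i) (u i) (v i) (y i) (z i).

Definition MIP_obj (n : nat) (y : nat -> R) : R := / INR n * sumR n y.

Definition MIP_optimal n d w L U b1 b2 l u beta v y z : Prop :=
  MIP_feasible n d w L U b1 b2 l u beta v y z /\
  forall beta' v' y' z', MIP_feasible n d w L U b1 b2 l u beta' v' y' z' ->
    MIP_obj n y' <= MIP_obj n y.

Definition is_min_over_X d L U (wi : nat -> R) (m : R) : Prop :=
  (exists beta, inX d L U beta /\ dot d wi beta = m) /\
  (forall beta, inX d L U beta -> m <= dot d wi beta).
Definition is_max_over_X d L U (wi : nat -> R) (m : R) : Prop :=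
  (exists beta, inX d L U beta /\ dot d wi beta = m) /\
  (forall beta, inX d L U beta -> dot d wi beta <= m).

(* Main.v *)
Require Import Defs.
From Stdlib Require Import Reals ZArith Lra Lia.
Open Scope R_scope.

Lemma int01 (x : R) : is_int x -> 0 <= x <= 1 -> x = 0 \/ x = 1.
Proof.
  intros [k ->] [H0 H1].
  apply le_IZR in H0. apply le_IZR in H1.
  assert (k = 0%Z \/ k = 1%Z) as [-> | ->] by lia; auto.
Qed.

Lemma inF_le (b1 b2 l u v y : R) z :
  b1 >= b2 /\ b2 >= 0 -> inF b1 b2 l u v y z -> y <= reward v b1 b2.
Proof.
  destruct z as [[z1 z2] z3]. unfold inF, reward.
  intros [Hb Hb'] (H1&H2&H3&H4&H5&H6&H7&H8&H9&I1&I2&I3).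
  destruct (int01 _ I1 H7) as [->| ->];
  destruct (int01 _ I2 H8) as [->| ->];
  destruct (int01 _ I3 H9) as [->| ->];
  destruct (Rle_dec v b2); try destruct (Rle_dec v b1); lra.
Qed.

Definition zsel (v b1 b2 : R) : R * R * R :=
  if Rle_dec v b2 then (1,0,0) else if Rle_dec v b1 then (0,1,0) else (0,0,1).

Lemma inF_ex (b1 b2 l u v : R) :
  b1 >= b2 -> l <= v <= u -> inF b1 b2 l u v (reward v b1 b2) (zsel v b1 b2).
Proof.
  intros Hb Hv. unfold inF, reward, zsel.
  assert (I0 : is_int 0) by (exists 0%Z; reflexivity).
  assert (I1 : is_int 1) by (exists 1%Z; reflexivity).
  destruct (Rle_dec v b2); [|destruct (Rle_dec v b1)];
  repeat split; auto; lra.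
Qed.

Lemma sumR_le (n : nat) (f g : nat -> R) :
  (forall i, (i < n)%nat -> f i <= g i) -> sumR n f <= sumR n g.
Proof.
  induction n; simpl; intros H; [lra|].
  assert (sumR n f <= sumR n g) by (apply IHn; intros; apply H; lia).
  assert (f n <= g n) by (apply H; lia). lra.
Qed.

Lemma invn_ge0 n : 0 <= / INR n.
Proof.
  destruct n. simpl. rewrite Rinv_0. lra.
  left. apply Rinv_0_lt_compat. apply lt_0_INR. lia.
Qed.

Theorem corollary1 (n d : nat) (w : nat -> nat -> R) (L U : R)
  (b1 b2 l u : nat -> R)
  (Hb : forall i, (i < n)%nat -> b1 i >= b2 i /\ b2 i >= 0)
  (Hl : forall i, (i < n)%nat -> is_min_over_X d L U (w i) (l i))
  (Hu : forall i, (i < n)%nat -> is_max_over_X d L U (w i) (u i)) :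
  (forall beta v y z,
     MIP_optimal n d w L U b1 b2 l u beta v y z ->
     P_optimal n d w L U b1 b2 beta) /\
  (forall beta,
     P_optimal n d w L U b1 b2 beta ->
     exists v y z, MIP_optimal n d w L U b1 b2 l u beta v y z).
Proof.
  set (V := fun beta i => dot d (w i) beta).
  set (Y := fun beta i => reward (V beta i) (b1 i) (b2 i)).
  set (Z := fun beta i => zsel (V beta i) (b1 i) (b2 i)).
  assert (Hfeas : forall beta, inX d L U beta ->
    MIP_feasible n d w L U b1 b2 l u beta (V beta) (Y beta) (Z beta)).
  { intros beta Hx. split; auto. intros i Hi. split; [reflexivity|].
    apply inF_ex. apply Hb; auto.
    destruct (Hl i Hi) as [_ A]. destruct (Hu i Hi) as [_ B].
    split; [apply A|apply B]; auto. }
  assert (Hobj : forall beta, MIP_obj n (Y beta) = revenue n d w b1 b2 beta).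
  { intros. reflexivity. }
  assert (Hle : forall beta v y z, MIP_feasible n d w L U b1 b2 l u beta v y z ->
    MIP_obj n y <= revenue n d w b1 b2 beta).
  { intros beta v y z [Hx H]. unfold MIP_obj, revenue.
    apply Rmult_le_compat_l. apply invn_ge0.
    apply sumR_le. intros i Hi. destruct (H i Hi) as [Hv HF].
    rewrite <- Hv. eapply inF_le; [apply Hb; exact Hi|exact HF]. }
  split.
  - intros beta v y z [Hf Hopt]. split. apply Hf.
    intros beta' Hx'.
    rewrite <- Hobj. eapply Rle_trans. apply (Hopt _ _ _ _ (Hfeas _ Hx')).
    eapply Hle; eauto.
  - intros beta [Hx Hopt]. exists (V beta), (Y beta), (Z beta).
    split. apply Hfeas; auto.
    intros beta' v' y' z' Hf'. rewrite Hobj.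
    eapply Rle_trans. eapply Hle; eauto. apply Hopt. apply Hf'.
Qed.
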